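(* Let $(X,\|\cdot,\cdot\|)$ be a linear 2-normed space and let $E$ be a nonempty (sequentially) closed and bounded subset of $X$. Let $T:E\to X$ be a strong accretive mapping. If $(I+T)(E)\supset E$, then the equation $Tx=\theta$ has a solution $x\in E$, where $\theta$ is the zero vector of $X$.
   Context: A linear 2-normed space is a real linear space $X$ of dimension greater than 1 with a function $\|\cdot,\cdot\|:X\times X\to\mathbb{R}$ such that: $\|x,y\|=0$ iff $x,y$ are linearly dependent; $\|x,y\|=\|y,x\|$; $\|\alpha x,y\|=|\alpha|\,\|x,y\|$; $\|x+y,z\|\le\|x,z\|+\|y,z\|$. A sequence $x_n\to x$ means $\|x_n-x,z\|\to0$ for every $z\in X$. $E$ is (sequentially) closed if every limit of a sequence in $E$ lies in $E$. For $e\in E$, $E$ is $e$-bounded if there is $M>0$ with $\|x,e\|\le M$ for all $x\in E$; $E$ is bounded if it is $e$-bounded for every $e\in E$. A mapping $T$ is strong accretive if, for a constant $k\in(0,1)$, for every $z\in X$ one has $\|(\lambda-k)(x-y),z\|\le\|(\lambda-1)(x-y)+(Tx-Ty),z\|$ for all $x,y$ in the domain of $T$ and all $\lambda>k$. *)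

(* Defs.v *)
From HB Require Import structures.
From mathcomp Require Import all_boot all_order all_algebra.
From mathcomp Require Import reals.
Set Implicit Arguments. Unset Strict Implicit. Unset Printing Implicit Defensive.
Import Order.TTheory GRing.Theory Num.Theory.
Local Open Scope ring_scope.

Definition lin_dep (R : realType) (X : lmodType R) (x y : X) : Prop :=
  exists a b : R, (a != 0 \/ b != 0) /\ a *: x + b *: y = 0.

Definition is_2norm (R : realType) (X : lmodType R) (N : X -> X -> R) : Prop :=
  (* dim X > 1 *)
  (exists x y : X, ~ lin_dep x y) /\
  (forall x y, N x y = 0 <-> lin_dep x y) /\
  (forall x y, N x y = N y x) /\
  (forall (a : R) x y, N (a *: x) y = `|a| * N x y) /\
  (forall x y z, N (x + y) z <= N x z + N y z).

Definition conv2 (R : realType) (X : lmodType R) (N : X -> X -> R)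
  (u : nat -> X) (x : X) : Prop :=
  forall z : X, forall eps : R, 0 < eps ->
    exists M : nat, forall n : nat, (M <= n)%N -> `|N (u n - x) z| < eps.

Definition closed2 (R : realType) (X : lmodType R) (N : X -> X -> R)
  (E : X -> Prop) : Prop :=
  forall (u : nat -> X) (x : X), (forall n, E (u n)) -> conv2 N u x -> E x.

Definition e_bounded (R : realType) (X : lmodType R) (N : X -> X -> R)
  (E : X -> Prop) (e : X) : Prop :=
  exists M : R, 0 < M /\ forall x, E x -> N x e <= M.

Definition bounded2 (R : realType) (X : lmodType R) (N : X -> X -> R)
  (E : X -> Prop) : Prop :=
  forall e, E e -> e_bounded N E e.

(* T, defined on E (values outside E are irrelevant), is strong accretive. *)
Definition strong_accretive (R : realType) (X : lmodType R) (N : X -> X -> R)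
  (E : X -> Prop) (T : X -> X) : Prop :=
  exists k : R, 0 < k /\ k < 1 /\
    forall z x y (lam : R), E x -> E y -> k < lam ->
      N ((lam - k) *: (x - y)) z <= N ((lam - 1) *: (x - y) + (T x - T y)) z.

(* Main.v *)
From HB Require Import structures.
From mathcomp Require Import all_boot all_order all_algebra.
Require Import Defs.
From mathcomp Require Import all_classical all_reals all_analysis.
Import Order.TTheory GRing.Theory Num.Theory.
Import numFieldNormedType.Exports.
Local Open Scope classical_set_scope.
Local Open Scope ring_scope.

From mathcomp Require Import lra.
Set Implicit Arguments. Unset Strict Implicit.
Lemma fix1d (R : realType) (L : R -> Prop) (g : R -> R) (q : R) (s0 : R) :
  0 <= q -> q < 1 -> L s0 ->
  (forall s, L s -> L (g s)) ->
  (forall s t, L s -> L t -> `|g s - g t| <= q * `|s - t|) ->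
  (forall (u : nat -> R) l, (forall n, L (u n)) ->
     (forall eps, 0 < eps -> exists M, forall n, (M <= n)%N -> `|u n - l| < eps) -> L l) ->
  exists s, L s /\ g s = s.
Proof.
move=> q0 q1 Ls0 gS glip clo.
pose U : set R := L.
have gS' : set_fun U U g by move=> x; exact: gS.
pose f := mkfun_fun gS'.
pose qq := NngNum q0.
have ctr : contraction qq f.
  split => //.
  move=> [a b] [Ua Ub] /=.
  exact: glip.
have cv := contraction_cvg ctr Ls0.
move/cvg_ex: cv => [l /cvgrPdist_lt Hl].
have yL : forall n, L (iter n g s0).
  by elim=> [|n IH] //=; apply: gS.
have conv : forall eps, 0 < eps -> exists M, forall n, (M <= n)%N -> `|iter n g s0 - l| < eps.
  move=> eps he; have := Hl eps he.
  move=> [M _ HM]; exists M => n Mn; rewrite distrC; exact: HM.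
have Ll : L l by apply: (clo _ _ yL conv).
exists l; split => //.
apply/eqP; rewrite -subr_eq0 -normr_le0.
apply/ler_addgt0Pr => e he.
rewrite add0r.
have [M HM] := conv (e / 2) (divr_gt0 he (ltr0Sn _ 1)).
have h1 := HM M (leqnn _).
have h2 := HM M.+1 (leqnSn _).
have h3 := glip _ _ Ll (yL M).
have : `|g l - l| <= `|g l - iter M.+1 g s0| + `|iter M.+1 g s0 - l| by apply: ler_distD.
rewrite /= in h2 *.
rewrite distrC in h1.
have hq : q * `|l - iter M g s0| <= `|l - iter M g s0|.
  by rewrite ler_piMl // ltW.
move=> h4.
rewrite (splitr e).
apply: (le_trans h4); apply: lerD; last by apply: ltW.
apply: (le_trans h3); apply: (le_trans hq); exact: ltW.
Qed.
Section H.
Variables (R : realType) (X : lmodType R).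

Lemma lin_dep_sym (x y : X) : lin_dep x y -> lin_dep y x.
Proof. by move=> [a [b [h e]]]; exists b, a; split; [case: h; auto | rewrite addrC]. Qed.

Lemma dep_scale (v d : X) : d != 0 -> lin_dep v d -> exists r : R, v = r *: d.
Proof.
move=> dn0 [a [b [h e]]].
have an0 : a != 0.
  apply/negP => /eqP a0; move: e; rewrite a0 scale0r add0r => /eqP.
  rewrite scaler_eq0 (negbTE dn0) orbF => /eqP b0.
  by case: h => /eqP; rewrite ?a0 ?b0.
exists (- (b / a)).
have : a *: v = - (b *: d) by apply/eqP; rewrite -addr_eq0 e.
move=> /(congr1 (fun w => a^-1 *: w)).
by rewrite scalerA mulVf // scale1r -scalerN scalerA scaleNr scalerN mulrC.
Qed.

Lemma line_diff (x : X) (a b : R) (d : X) : (x + a *: d) - (x + b *: d) = (a - b) *: d.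
Proof. by rewrite opprD addrACA subrr add0r scalerBl. Qed.

Lemma exists_indep (xa ya d : X) : ~ lin_dep xa ya -> d != 0 -> exists z, ~ lin_dep d z.
Proof.
move=> ind dn0.
case: (pselect (lin_dep d xa)) => [hx|hx]; last by exists xa.
case: (pselect (lin_dep d ya)) => [hy|hy]; last by exists ya.
exfalso; apply: ind.
have [al ea] := dep_scale dn0 (lin_dep_sym hx).
have [be eb] := dep_scale dn0 (lin_dep_sym hy).
case: (eqVneq al 0) => [a0|a0].
  exists 1, 0; split; first by left; exact: oner_neq0.
  by rewrite ea a0 !scale0r scaler0 addr0.
exists be, (- al); split; first by right; rewrite oppr_eq0.
by rewrite ea eb !scalerA mulrC mulNr scaleNr subrr.
Qed.
End H.

Theorem theorem3p12 (R : realType) (X : lmodType R) (N : X -> X -> R)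
  (E : X -> Prop) (T : X -> X) :
  is_2norm N ->
  (exists x0, E x0) ->
  closed2 N E ->
  bounded2 N E ->
  strong_accretive N E T ->
  (forall y, E y -> exists x, E x /\ x + T x = y) ->
  exists x, E x /\ T x = 0.
Proof.
move=> [[xa [ya ind]] [N0 [Nsym [Nscal Ntri]]]] [x0 Ex0] clo _ [k [k0 [k1 acc]]] surj.
have Nge0 : forall x z, 0 <= N x z.
  move=> x z.
  have h0 : N 0 z = 0 by rewrite -(scale0r x) Nscal normr0 mul0r.
  have := Ntri x (- x) z; rewrite subrr h0 -scaleN1r Nscal normrN normr1 mul1r.
  move=> h; lra.
have Nself : forall x, N x x = 0.
  move=> x; apply/N0; exists 1, (-1); split; first by left; exact: oner_neq0.
  by rewrite scale1r scaleN1r subrr.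
have k2 : 0 < 2 - k by lra.
have contr : forall x y z, E x -> E y ->
    (2 - k) * N (x - y) z <= N ((x + T x) - (y + T y)) z.
  move=> x y z Ex Ey.
  have := acc z x y 2 Ex Ey ltac:(lra).
  rewrite Nscal ger0_norm; last by lra.
  have -> : (2:R) - 1 = 1 by lra.
  rewrite scale1r.
  by have -> : x - y + (T x - T y) = x + T x - (y + T y) by rewrite opprD addrACA.
have [S HS] : exists S : X -> X, forall y, E y -> E (S y) /\ S y + T (S y) = y.
  have [f hf] := choice (P := fun y x => E y -> E x /\ x + T x = y) (fun y =>
    match pselect (E y) with
    | left Ey => let: ex_intro x hx := surj y Ey in ex_intro _ x (fun _ => hx)
    | right nEy => ex_intro _ 0 (fun Ey => False_ind _ (nEy Ey))
    end).
  by exists f.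
case: (eqVneq (S x0 - x0) 0) => [e|dn0].
  have e' : S x0 = x0 by apply/eqP; rewrite -subr_eq0 e.
  exists (S x0); split; first exact: (HS x0 Ex0).1.
  have := (HS x0 Ex0).2; rewrite e' => h.
  by apply: (addrI x0); rewrite h addr0.
set d := S x0 - x0 in dn0.
have [z0 iz0] := exists_indep ind dn0.
have cpos : 0 < N d z0.
  rewrite lt_neqAle Nge0 andbT eq_sym; apply/negP => /eqP h.
  by apply: iz0; apply/N0.
have line : forall s, E (x0 + s *: d) -> exists r, S (x0 + s *: d) = x0 + r *: d.
  move=> s Ey.
  have [Ew Hw] := HS _ Ey.
  have := contr _ _ d Ew (HS x0 Ex0).1.
  rewrite Hw (HS x0 Ex0).2.
  have ->: x0 + s *: d - x0 = s *: d by rewrite addrC addKr.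
  rewrite Nscal Nself mulr0 => h.
  have h0 : N (S (x0 + s *: d) - S x0) d = 0.
    have := Nge0 (S (x0 + s *: d) - S x0) d; nra.
  have [r er] := dep_scale dn0 (proj1 (N0 _ _) h0).
  exists (1 + r).
  rewrite scalerDl scale1r -er /d.
  by rewrite addrA (addrC x0) subrK addrC subrK.
have [g Hg] := choice (P := fun s r => E (x0 + s *: d) -> S (x0 + s *: d) = x0 + r *: d)
  (fun s => match pselect (E (x0 + s *: d)) with
    | left Es => let: ex_intro r hr := line s Es in ex_intro _ r (fun _ => hr)
    | right nEs => ex_intro _ 0 (fun Es => False_ind _ (nEs Es))
    end).
have [s [Ls gs]] : exists s, E (x0 + s *: d) /\ g s = s.
  apply: (@fix1d R (fun s => E (x0 + s *: d)) g (2 - k)^-1 0).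
  - by rewrite invr_ge0; lra.
  - by rewrite invf_lt1 //; lra.
  - by rewrite scale0r addr0.
  - by move=> t Lt; rewrite -(Hg t Lt); exact: (HS _ Lt).1.
  - move=> t u Lt Lu.
    have := contr _ _ z0 (HS _ Lt).1 (HS _ Lu).1.
    rewrite (HS _ Lt).2 (HS _ Lu).2 (Hg t Lt) (Hg u Lu) !line_diff !Nscal => h.
    rewrite -(ler_pM2l k2) mulrA mulfV ?mul1r; last by rewrite gt_eqF.
    by rewrite -(ler_pM2r cpos) -mulrA.
  - move=> u l Lu cv.
    apply: (clo (fun n => x0 + u n *: d)) => // z eps he.
    case: (eqVneq (N d z) 0) => h.
      by exists 0%N => n _; rewrite line_diff Nscal h mulr0 normr0.
    have pos : 0 < N d z by rewrite lt_neqAle eq_sym h Nge0.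
    have [M HM] := cv (eps / N d z) (divr_gt0 he pos).
    exists M => n Mn; rewrite line_diff Nscal ger0_norm ?mulr_ge0 //.
    by rewrite -ltr_pdivlMr //; exact: HM.
exists (x0 + s *: d); split => //.
have := (HS _ Ls).2; rewrite (Hg s Ls) gs => h.
by apply: (addrI (x0 + s *: d)); rewrite h addr0.
Qed.
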